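(* Let $(M,d,\mu)$ be a quasi-$b$-geodesic metric measure space with $\mu$ satisfying $(VD)_{\mathrm{loc}}$ and $(VD)_\infty$. Then there exist $c,\gamma>0$ such that $$\frac{V(x,r)}{V(x,s)}\ge c\left(\frac rs\right)^\gamma$$ for all $x\in M$ and all $b\le s\le r\le\operatorname{diam}(M)$, where $\operatorname{diam}(M)=\sup\{d(x,y):x,y\in M\}$.
   Context: Metric measure space: locally compact metric space with a Radon measure $\mu$ of full support; $B(x,r)=\{y:d(x,y)\le r\}$, $V(x,r)=\mu(B(x,r))$. Quasi-$b$-geodesic: there is $C$ with $d_b\le Cd$, where $d_b(x,y)=\inf\sum_i d(x_i,x_{i+1})$ over sequences $x=x_0,\dots,x_m=y$ with $d(x_i,x_{i+1})\le b$. $(VD)_{\mathrm{loc}}$: for each $r>0$ there is $C_r$ with $V(x,2r)\le C_rV(x,r)$ for all $x$. $(VD)_\infty$: there are $r_0,C>0$ with $V(x,2r)\le CV(x,r)$ for all $x$, $r\ge r_0$. *)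

(* Defs.v *)
From HB Require Import structures.
From mathcomp Require Import all_boot all_order all_algebra.
From mathcomp Require Import all_classical all_reals all_analysis.
Set Implicit Arguments. Unset Strict Implicit. Unset Printing Implicit Defensive.
Import Order.TTheory GRing.Theory Num.Theory.
Local Open Scope classical_set_scope.
Local Open Scope ring_scope.

Section MMS.
Context {T : Type} {R : realType} (dist : T -> T -> R).

Definition is_metric : Prop :=
  [/\ (forall x y, 0 <= dist x y),
      (forall x y, dist x y = 0 <-> x = y),
      (forall x y, dist x y = dist y x) &
      (forall x y z, dist x z <= dist x y + dist y z)].

Definition cball (x : T) (r : R) : set T := [set y | dist x y <= r].
Definition oball (x : T) (r : R) : set T := [set y | dist x y < r].

Definition open_d (A : set T) : Prop :=
  forall x, A x -> exists2 e : R, 0 < e & oball x e `<=` A.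

Definition compact_d (K : set T) : Prop :=
  forall (I : Type) (U : I -> set T), (forall i, open_d (U i)) ->
    K `<=` \bigcup_i U i ->
    exists2 F : set I, finite_set F & K `<=` \bigcup_(i in F) U i.

Definition locally_compact_d : Prop :=
  forall x, exists2 K, compact_d K & exists2 e : R, 0 < e & oball x e `<=` K.

Definition diam : \bar R :=
  ereal_sup [set (dist x y)%:E | x in [set: T] & y in [set: T]].

(* b-chains from x to y: x = x_0, x_1, ..., x_m = y with d(x_i,x_{i+1}) <= b,
   represented by the list [x_1; ...; x_m] *)
Definition bchain (b : R) (x y : T) (s : seq T) : Prop :=
  path (fun u v => dist u v <= b) x s /\ last x s = y.

Definition chain_length (x : T) (s : seq T) : R :=
  \sum_(p <- zip (x :: s) s) dist p.1 p.2.

Definition d_b (b : R) (x y : T) : \bar R :=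
  ereal_inf [set (chain_length x s)%:E | s in [set s | bchain b x y s]].

Definition quasi_b_geodesic (b : R) : Prop :=
  exists C : R, forall x y, (d_b b x y <= (C * dist x y)%:E)%E.

End MMS.

Section Measure.
Context {d : measure_display} {T : measurableType d} {R : realType}
  (dist : T -> T -> R) (mu : set T -> \bar R).

Definition borel_structure : Prop :=
  forall A : set T, measurable A <-> <<s [set U | open_d dist U] >> A.

Definition radon : Prop :=
  [/\ (forall K, compact_d dist K -> (mu K < +oo)%E),
      (forall A, measurable A ->
         mu A = ereal_inf [set mu U | U in [set U | open_d dist U /\ A `<=` U]]) &
      (forall U, open_d dist U ->
         mu U = ereal_sup [set mu K | K in [set K | compact_d dist K /\ K `<=` U]])].

Definition full_support : Prop :=
  forall U, open_d dist U -> U !=set0 -> (0 < mu U)%E.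

Definition V (x : T) (r : R) : \bar R := mu (cball dist x r).

Definition VD_loc : Prop :=
  forall r : R, 0 < r -> exists C : R, forall x, (V x (2 * r) <= C%:E * V x r)%E.

Definition VD_infty : Prop :=
  exists r0 : R, exists C : R, [/\ 0 < r0, 0 < C &
    forall x r, r0 <= r -> (V x (2 * r) <= C%:E * V x r)%E].

End Measure.

(* Main.v *)
Require Import Defs.
From HB Require Import structures.
From mathcomp Require Import all_boot all_order all_algebra.
From mathcomp Require Import all_classical all_reals all_analysis.
From mathcomp Require Import ring lra.
Import Order.TTheory GRing.Theory Num.Theory.
Local Open Scope classical_set_scope.
Local Open Scope ring_scope.

Section Aux.
Context (d : measure_display) (T : measurableType d) (R : realType)
  (dist : T -> T -> R) (mu : {measure set T -> \bar R}).
Hypothesis hmet : is_metric dist.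
Hypothesis hbor : borel_structure dist.

Lemma dtri x y z : dist x z <= dist x y + dist y z.
Proof. by case: hmet. Qed.
Lemma dsym x y : dist x y = dist y x.
Proof. by case: hmet. Qed.
Lemma dge0 x y : 0 <= dist x y.
Proof. by case: hmet. Qed.

Lemma cball_meas x r : measurable (cball dist x r).
Proof.
have -> : cball dist x r = ~` [set y | r < dist x y].
  apply/seteqP; split => y /=; rewrite /cball /=.
    by move=> h; apply/negP; rewrite -leNgt.
  by move/negP; rewrite -leNgt.
apply: measurableC; apply/hbor; apply: sub_sigma_algebra => /=.
move=> y /= hy; exists (dist x y - r); first by rewrite subr_gt0.
move=> w /= hw; rewrite /oball /= in hw.
have := dtri x w y; rewrite (dsym w y); lra.
Qed.

Local Notation V := (V dist mu).

Lemma V_ge0 x r : (0 <= V x r)%E.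
Proof. exact: measure_ge0. Qed.

Lemma Vmono x r r' : r <= r' -> (V x r <= V x r')%E.
Proof.
move=> h; apply: le_measure; rewrite ?inE; try exact: cball_meas.
by move=> y /= hy; apply: le_trans hy h.
Qed.

Variable b : R.
Hypothesis hb : (0 : R) < b.
Hypothesis hloc : VD_loc dist mu.
Hypothesis hinf : VD_infty dist mu.

Lemma powdbl n : exists D : R, 0 < D /\ forall x, (V x (2 ^+ n * b) <= D%:E * V x b)%E.
Proof.
elim: n => [|n [D [D0 HD]]].
  by exists 1; split => // x; rewrite expr0 mul1r mul1e.
have [C HC] := hloc (2 ^+ n * b) (mulr_gt0 (exprn_gt0 _ (ltr0Sn _ 1)) hb).
exists (Num.max C 1 * D); split.
  by apply: mulr_gt0 => //; rewrite lt_max ltr01 orbT.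
move=> x; rewrite exprS -mulrA.
apply: (le_trans (HC x)).
apply: (@le_trans _ _ ((Num.max C 1)%:E * V x (2^+n*b))%E).
  by apply: lee_wpmul2r; [exact: V_ge0| rewrite lee_fin le_max lexx].
rewrite EFinM -muleA; apply: lee_wpmul2l; last exact: HD.
by rewrite lee_fin le_max ler01 orbT.
Qed.

Lemma unifdbl : exists D : R, 0 < D /\ forall x r, b <= r -> (V x (2 * r) <= D%:E * V x r)%E.
Proof.
have [r0 [C0 [r00 C00 H0]]] := hinf.
have hk := @archi_boundP R (2 * r0 / b) (ltW (divr_gt0 (mulr_gt0 (ltr0Sn _ 1) r00) hb)).
set k := Num.Def.archi_bound _ in hk.
have [Dn [Dn0 HDn]] := powdbl k.
exists (C0 + Dn); split; first exact: addr_gt0.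
move=> x r hr; have [r0r|rr0] := leP r0 r.
  apply: (le_trans (H0 x r r0r)); apply: lee_wpmul2r; first exact: V_ge0.
  by rewrite lee_fin lerDl ltW.
have h2 : 2 * r <= 2 ^+ k * b.
  have : (k%:R : R) <= 2 ^+ k.
    by rewrite -natrX ler_nat ltnW // ltn_expl.
  rewrite ltr_pdivrMr // in hk.
  move=> hk2; have := ler_wpM2r (ltW hb) hk2; lra.
apply: (@le_trans _ _ (V x (2^+k*b))); first exact: Vmono. apply: (le_trans (HDn x)).
apply: (@le_trans _ _ (Dn%:E * V x r)%E).
  by apply: lee_wpmul2l; [rewrite lee_fin ltW|exact: Vmono].
by apply: lee_wpmul2r; [exact: V_ge0| rewrite lee_fin lerDr ltW].
Qed.

Lemma far_point x r : 0 < r -> (r%:E <= diam dist)%E -> exists y, r / 3 < dist x y.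
Proof.
move=> r0 hr.
have : ((2 * r / 3)%:E < diam dist)%E.
  by apply: lt_le_trans hr; rewrite lte_fin; lra.
move/ereal_sup_gt => [e [y1 _ [y2 _ <-]]]; rewrite lte_fin => h.
have := dtri y1 x y2; rewrite (dsym y1 x) => ht.
have [h1|h1] := ltP (r / 3) (dist x y1); first by exists y1.
by exists y2; lra.
Qed.

Hypothesis hq : quasi_b_geodesic dist b.

Lemma chain_exists x y : exists s, bchain dist b x y s.
Proof.
have [C HC] := hq; apply: contrapT => hn.
have : [set (chain_length dist x s)%:E | s in [set s | bchain dist b x y s]] = set0.
  by apply/seteqP; split => // e [s hs _]; apply: hn; exists s.
move=> h0; have := HC x y; rewrite /d_b h0 ereal_inf0.
by rewrite leye_eq.
Qed.

Lemma chain_point x (r : R) : b < r / 6 -> forall s u, dist x u < r / 6 ->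
  path (fun u v => dist u v <= b) u s -> r / 3 < dist x (last u s) ->
  exists z, r / 6 <= dist x z <= r / 3.
Proof.
move=> hbr; elim => [|v s IH] u hu /=; first by move=> _ /= hl; exfalso; have hb2 : (0:R) < b by []; lra.
move=> /andP[huv hp] hl.
have [hv|hv] := ltP (dist x v) (r / 6); first exact: (IH v).
exists v; rewrite hv /=; have := dtri x u v; lra.
Qed.


Lemma key (D : R) : 0 < D ->
  (forall x r, b <= r -> (V x (2 * r) <= D%:E * V x r)%E) ->
  forall x (r : R), 24 * b <= r -> (r%:E <= diam dist)%E ->
  ((1 + (D ^+ 3)^-1)%:E * V x (r / 24) <= V x r)%E.
Proof.
move=> D0 HD x r hr hdiam.
have hb2 : (0:R) < b by [].
have r0 : 0 < r by lra.
have [y hy] := far_point x r r0 hdiam.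
have [s [hp hl]] := chain_exists x y.
have [z /andP[hz1 hz2]] : exists z, r / 6 <= dist x z <= r / 3.
  apply: (chain_point x r _ s x _ hp); first lra.
    by have [_ h _ _] := hmet; rewrite (proj2 (h x x)) //; lra.
  by rewrite hl.
set A := cball dist x (r / 24).
set B := cball dist z (r / 12).
have hdisj : A `&` B = set0.
  apply/seteqP; split => // w [hA hB]; rewrite /A /B /cball /= in hA hB.
  have := dtri x w z; rewrite (dsym w z); lra.
have hsub : A `|` B `<=` cball dist x r.
  move=> w [hA|hB]; rewrite /cball /=.
    by rewrite /A /cball /= in hA; lra.
  rewrite /B /cball /= in hB; have := dtri x z w; lra.
have hAB : mu (A `|` B) = (mu A + mu B)%E.
  by apply: measureU => //; exact: cball_meas.
have hVr : (mu (A `|` B) <= V x r)%E.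
  apply: le_measure; rewrite ?inE //; last exact: cball_meas.
  by apply: measurableU; exact: cball_meas.
have hbr : b <= r / 12 by lra.
have hV : (V x (r / 24) <= (D ^+ 3)%:E * V z (r / 12))%E.
  apply: (@le_trans _ _ (V z (2 * (2 * (2 * (r / 12)))))).
    apply: le_measure; rewrite ?inE; try exact: cball_meas.
    move=> w; rewrite /cball /= => hw; have := dtri z x w; rewrite (dsym z x); lra.
  apply: (le_trans (HD _ _ _)); first lra.
  apply: (@le_trans _ _ (D%:E * (D%:E * V z (2 * (r / 12))))%E).
    by apply: lee_wpmul2l; [rewrite lee_fin ltW|apply: HD; lra].
  rewrite exprS expr2 !EFinM -!muleA; apply: lee_wpmul2l; first by rewrite lee_fin ltW.
  apply: lee_wpmul2l; first by rewrite lee_fin ltW.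
  by apply: HD.
have hD3 : 0 < D ^+ 3 by apply: exprn_gt0.
have hV2 : ((D ^+ 3)^-1%:E * V x (r / 24) <= V z (r / 12))%E.
  apply: (@le_trans _ _ ((D ^+ 3)^-1%:E * ((D ^+ 3)%:E * V z (r / 12)))%E).
    by apply: lee_wpmul2l => //; rewrite lee_fin invr_ge0 ltW.
  by rewrite muleA -EFinM mulVf ?gt_eqF // mul1e.
have hD3' : 0 <= (D ^+ 3)^-1 by rewrite invr_ge0 ltW.
apply: (le_trans _ hVr); rewrite hAB EFinD ge0_muleDl ?lee_fin //.
by rewrite mul1e; apply: leeD2l.
Qed.


Lemma induct (D : R) : 0 < D ->
  (forall x r, b <= r -> (V x (2 * r) <= D%:E * V x r)%E) ->
  forall (g : R), 0 <= g -> 24 `^ g = 1 + (D ^+ 3)^-1 ->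
  forall x m (s r : R), b <= s -> s <= r -> (r%:E <= diam dist)%E ->
  r < 24 ^+ m * s ->
  (((r / s) `^ g)%:E * V x s <= (1 + (D ^+ 3)^-1)%:E * V x r)%E.
Proof.
move=> D0 HD g g0 hg x; set q := 1 + _ in hg *.
have hb2 : (0:R) < b by [].
have q0 : 0 <= q by rewrite /q addr_ge0 // invr_ge0 exprn_ge0 // ltW.
elim => [|m IH] s r hs hsr hr hrm.
  by exfalso; rewrite expr0 mul1r in hrm; lra.
have s0 : 0 < s by lra.
have [h24|h24] := ltP r (24 * s).
  apply: (@le_trans _ _ (q%:E * V x s)%E).
    apply: lee_wpmul2r; first exact: V_ge0.
    rewrite lee_fin -hg; apply: ge0_ler_powR => //; rewrite ?nnegrE.
    - by apply: divr_ge0; lra.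
    - lra.
    - by rewrite ler_pdivrMr //; lra.
  by apply: lee_wpmul2l; [rewrite lee_fin | exact: Vmono].
have hr' : r / 24 < 24 ^+ m * s.
  by rewrite exprS in hrm; lra.
have := IH s (r / 24) hs ltac:(lra) ltac:(apply: le_trans hr; rewrite lee_fin; lra) hr'.
have -> : (r / s) `^ g = q * (r / 24 / s) `^ g.
  rewrite -hg -powRM; [|lra|by apply: divr_ge0; lra].
  by congr (_ `^ _); field; rewrite gt_eqF.
move=> hIH; rewrite EFinM -muleA.
apply: (@le_trans _ _ (q%:E * (q%:E * V x (r / 24)))%E).
  by apply: lee_wpmul2l; rewrite ?lee_fin.
apply: lee_wpmul2l; first by rewrite lee_fin.
by apply: key => //; lra.
Qed.

End Aux.


Theorem lemma2p12 (d : measure_display) (T : measurableType d) (R : realType)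
  (dist : T -> T -> R) (mu : {measure set T -> \bar R}) (b : R) :
  is_metric dist -> locally_compact_d dist -> borel_structure dist ->
  radon dist mu -> full_support dist mu ->
  0 < b -> quasi_b_geodesic dist b ->
  VD_loc dist mu -> VD_infty dist mu ->
  exists c : R, exists gamma : R, [/\ 0 < c, 0 < gamma &
    forall (x : T) (s r : R), b <= s -> s <= r -> (r%:E <= diam dist)%E ->
      ((c * (r / s) `^ gamma)%:E * V dist mu x s <= V dist mu x r)%E].
Proof.
move=> hmet _ hbor _ _ hb hq hloc hinf.
have [D [D0 HD]] := @unifdbl _ _ _ _ mu hmet hbor b hb hloc hinf.
set q := 1 + (D ^+ 3)^-1.
have q1 : 1 < q by rewrite /q ltrDl invr_gt0 exprn_gt0.
have q0 : 0 < q by apply: lt_trans q1.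
have l24 : 0 < ln (24 : R) by apply: ln_gt0; lra.
have lq : 0 < ln q by apply: ln_gt0.
set g := ln q / ln 24.
have g0 : 0 < g by apply: divr_gt0.
have hg : 24 `^ g = q.
  rewrite /powR ifF; last by apply/negbTE; rewrite gt_eqF //; lra.
  by rewrite /g mulrAC -mulrA mulfV ?gt_eqF // mulr1 lnK // posrE.
exists q^-1, g; split => //; first by rewrite invr_gt0.
move=> x s r hs hsr hr.
have hb2 : (0:R) < b by [].
have s0 : 0 < s by lra.
have r0 : 0 < r by lra.
have hk := @archi_boundP R (r / s) (ltW (divr_gt0 r0 s0)).
set k := Num.Def.archi_bound _ in hk.
have hk2 : (k%:R : R) <= 24 ^+ k.
  by rewrite -natrX ler_nat; apply: ltnW; apply: ltn_expl.
have hrk : r < 24 ^+ k * s.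
  rewrite ltr_pdivrMr // in hk; have := ler_wpM2r (ltW s0) hk2; lra.
have := @induct _ _ _ _ mu hmet hbor b hb hq D D0 HD _ (ltW g0) hg x k s r hs hsr hr hrk.
move=> h; rewrite EFinM -muleA.
apply: (@le_trans _ _ (q^-1%:E * (q%:E * V dist mu x r))%E).
  by apply: lee_wpmul2l => //; rewrite lee_fin invr_ge0 ltW.
by rewrite muleA -EFinM mulVf ?gt_eqF // mul1e.
Qed.
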